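(* Let $H=(V,E)$ be a hypergraph with $E\ne\emptyset$, without empty edges, such that $|e|$ is even for every $e\in E$, and let $H^T=(E,V^T)$ be its dual. Let $E'\subseteq E$. Then $(V,E')$ is a $2$-factor of $H$ if and only if $H^T$ has an Euler family whose anchor set is exactly $E'$ and which traverses every vertex $e\in E'$ of $H^T$ exactly $|e|/2$ times. Likewise, $(V,E')$ is a connected $2$-factor of $H$ if and only if $H^T$ has an Euler tour whose anchor set is exactly $E'$ and which traverses every $e\in E'$ exactly $|e|/2$ times.
   Context: A hypergraph $H=(V,E)$ consists of a finite nonempty vertex set $V$, a finite edge set $E$ disjoint from $V$, and an incidence function assigning to each edge $e\in E$ a subset of $V$ (also denoted $e$); distinct edges may have the same vertex set. The degree of a vertex is the number of edges containing it. A $2$-factor of $H$ is a hypersubgraph $(V,E')$ with $E'\subseteq E$ in which every vertex of $V$ has degree exactly $2$; it is connected if any two distinct vertices are joined by a walk in $(V,E')$. The dual of $H$ is the hypergraph $H^T=(E,V^T)$ with vertex set $E$ and edge set $V^T=\{v^T: v\in V\}$, where $v^T=\{e\in E: v\in e\}$. A walk is a sequence $W=v_0e_1v_1e_2\cdots e_kv_k$ of vertices $v_i$ and edges $e_i$ such that for each $i$, $v_{i-1}\ne v_i$ and $v_{i-1},v_i\in e_i$; the $v_i$ are its anchors. $W$ is closed if $k\ge 2$ and $v_0=v_k$; it is a strict trail if $e_1,\dots,e_k$ are pairwise distinct. For a closed walk, the number of times it traverses a vertex $x$ is the number of indices $i\in\{1,\dots,k\}$ with $v_i=x$ (so the common endpoint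 counts once). An Euler tour is a closed strict trail traversing every edge; an Euler family is a family of closed strict trails such that every edge lies in exactly one trail and no two trails have a common anchor. The anchor set of an Euler family (or tour) is the set of all anchors of its trails, and the number of times the family traverses a vertex is the sum over its trails. *)

(* Defs.v *)
From mathcomp Require Import all_boot.
Set Implicit Arguments. Unset Strict Implicit. Unset Printing Implicit Defensive.

(* A hypergraph is given by a vertex finType T, an edge finType F
   (disjoint by typing) and an incidence function inc : F -> {set T}. *)

Section Walks.
Variables (T F : finType) (inc : F -> {set T}).

(* A walk v0 e1 v1 ... ek vk is represented by its start v0 and the
   sequence of steps [:: (e1,v1); ...; (ek,vk)].  [is_walk_in A x s]:
   it is a walk starting at x all of whose edges lie in A. *)
Fixpoint is_walk_in (A : {set F}) (x : T) (s : seq (F * T)) : bool :=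
  match s with
  | [::] => true
  | (e, y) :: s' =>
      [&& x != y, e \in A, x \in inc e, y \in inc e & is_walk_in A y s']
  end.

Definition is_walk (x : T) (s : seq (F * T)) := is_walk_in setT x s.

Definition walk_end (x : T) (s : seq (F * T)) : T := last x (map snd s).

Definition anchors (x : T) (s : seq (F * T)) : seq T := x :: map snd s.

Definition wedges (s : seq (F * T)) : seq F := map fst s.

Definition is_closed_walk (x : T) (s : seq (F * T)) : bool :=
  [&& is_walk x s, 2 <= size s & walk_end x s == x].

Definition is_strict_trail (x : T) (s : seq (F * T)) : bool :=
  is_walk x s && uniq (wedges s).

Definition is_closed_strict_trail (x : T) (s : seq (F * T)) : bool :=
  is_closed_walk x s && uniq (wedges s).

Definition traversals (y : T) (s : seq (F * T)) : nat :=
  count (pred1 y) (map snd s).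

Definition is_euler_tour (x : T) (s : seq (F * T)) : Prop :=
  is_closed_strict_trail x s /\ forall e : F, e \in wedges s.

Definition tour_anchor_set (x : T) (s : seq (F * T)) : {set T} :=
  [set y | y \in anchors x s].

Definition is_euler_family (fam : seq (T * seq (F * T))) : Prop :=
  [/\ forall t, t \in fam -> is_closed_strict_trail t.1 t.2,
      forall e : F, count (fun t => e \in wedges t.2) fam = 1 &
      forall i j, i < size fam -> j < size fam -> i != j ->
        forall y : T,
          y \in anchors (nth (y, [::]) fam i).1 (nth (y, [::]) fam i).2 ->
          y \notin anchors (nth (y, [::]) fam j).1 (nth (y, [::]) fam j).2].

Definition family_anchor_set (fam : seq (T * seq (F * T))) : {set T} :=
  [set y | has (fun t => y \in anchors t.1 t.2) fam].

Definition family_traversals (y : T) (fam : seq (T * seq (F * T))) : nat :=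
  \sum_(t <- fam) traversals y t.2.

Definition is_two_factor (A : {set F}) : Prop :=
  forall v : T, #|[set e in A | v \in inc e]| = 2.

Definition is_connected_sub (A : {set F}) : Prop :=
  forall u v : T, u != v ->
    exists s : seq (F * T), is_walk_in A u s && (walk_end u s == v).

Definition is_connected_two_factor (A : {set F}) : Prop :=
  is_two_factor A /\ is_connected_sub A.

End Walks.

Definition dual_inc (V E : finType) (inc : E -> {set V}) : V -> {set E} :=
  fun v => [set e | v \in inc e].

(* Main.v *)
Require Import Defs.
From mathcomp Require Import all_boot zify.
From Stdlib Require Import Classical.
Set Implicit Arguments. Unset Strict Implicit. Unset Printing Implicit Defensive.

Section Gen.
Variables (T F : finType) (inc : F -> {set T}).

Lemma walk_cat (A : {set F}) x s1 s2 :
  is_walk_in inc A x (s1 ++ s2) =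
  is_walk_in inc A x s1 && is_walk_in inc A (walk_end x s1) s2.
Proof.
elim: s1 x => [|[e y] s1 IH] x //=.
by rewrite IH /walk_end /= !andbA.
Qed.

Lemma walk_end_cat (x : T) (s1 s2 : seq (F * T)) :
  walk_end x (s1 ++ s2) = walk_end (walk_end x s1) s2.
Proof. by rewrite /walk_end map_cat last_cat. Qed.

Lemma walk_end_cons (x : T) (p : F * T) s : walk_end x (p :: s) = walk_end p.2 s.
Proof. by []. Qed.

Lemma walk_end_rcons (x : T) s (p : F * T) : walk_end x (rcons s p) = p.2.
Proof. by rewrite /walk_end map_rcons last_rcons. Qed.

Lemma rot_closed (A : {set F}) x s1 s2 :
  is_walk_in inc A x (s1 ++ s2) -> walk_end x (s1 ++ s2) = x ->
  is_walk_in inc A (walk_end x s1) (s2 ++ s1) &&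
  (walk_end (walk_end x s1) (s2 ++ s1) == walk_end x s1).
Proof.
rewrite walk_cat walk_end_cat => /andP [w1 w2] e.
by rewrite walk_cat e w1 w2 walk_end_cat e eqxx.
Qed.

Lemma count_belast (p : pred T) (x : T) s :
  count p (belast x s) + p (last x s) = p x + count p s.
Proof.
have := congr1 (count p) (lastI x s).
by rewrite -cats1 count_cat /= addn0 => <-.
Qed.

Lemma walk_in_sub (A B : {set F}) x s :
  A \subset B -> is_walk_in inc A x s -> is_walk_in inc B x s.
Proof.
move=> /subsetP AB; elim: s x => [|[e y] s IH] x //=.
case/and5P=> h1 h2 h3 h4 h5; rewrite h1 (AB _ h2) h3 h4 /=; exact: IH.
Qed.

End Gen.

Section Main.
Variables (V E : finType) (inc : E -> {set V}) (E' : {set E}).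
Notation D := (dual_inc inc).

Lemma inD v e : (e \in D v) = (v \in inc e).
Proof. by rewrite /dual_inc inE. Qed.

Definition trip (x : E) (s : seq (V * E)) : seq (E * (V * E)) :=
  zip (belast x (map snd s)) s.
Definition vc (q : E * (V * E)) := q.2.1.
Definition atz (z : E) (q : E * (V * E)) := (q.1 == z) || (q.2.2 == z).
Definition goodq (q : E * (V * E)) :=
  [&& q.1 != q.2.2, q.1 \in E', q.2.2 \in E', q.2.1 \in inc q.1 & q.2.1 \in inc q.2.2].
Definition anchE (x : E) (s : seq (V * E)) := (x \in E') && all (fun y => y \in E') (map snd s).
Definition covs (fam : seq (E * seq (V * E))) := flatten (map (fun t => wedges t.2) fam).
Definition tripF (fam : seq (E * seq (V * E))) := flatten (map (fun t => trip t.1 t.2) fam).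

Lemma map_vc_trip x s : map vc (trip x s) = wedges s.
Proof.
rewrite /trip /wedges /vc.
rewrite (_ : (fun q : E * (V * E) => q.2.1) = fst \o snd) // map_comp.
congr (map fst _); apply: (@unzip2_zip _ _ _ s).
by rewrite size_belast size_map.
Qed.

Lemma map_vc_tripF fam : map vc (tripF fam) = covs fam.
Proof.
elim: fam => [|t fam IH] //=.
rewrite /tripF /= map_cat map_vc_trip; congr (_ ++ _); exact: IH.
Qed.

Lemma trip_cons x v y s : trip x ((v, y) :: s) = (x, (v, y)) :: trip y s.
Proof. by []. Qed.

Lemma walk_good x s : is_walk D x s -> anchE x s -> all goodq (trip x s).
Proof.
rewrite /is_walk /anchE.
elim: s x => [|[v y] s IH] x //=.
case/and5P=> xy _ xv yv w /andP [xE /andP [yE aE]].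
rewrite /goodq /= xy xE yE -!inD xv yv /=.
apply: IH => //; by rewrite yE.
Qed.

Lemma count_trip z x s : all goodq (trip x s) ->
  count (atz z) (trip x s) =
  count (pred1 z) (belast x (map snd s)) + count (pred1 z) (map snd s).
Proof.
move=> g.
have e0 : count (predI (fun q : E * (V * E) => q.1 == z) (fun q => q.2.2 == z)) (trip x s) = 0.
  apply/eqP; rewrite -leqn0 leqNgt -has_count; apply/hasPn => q qin /=.
  move/allP: g => /(_ q qin) /andP [ne _].
  by apply/negP => /andP [/eqP a /eqP b]; rewrite a b eqxx in ne.
have := count_predUI (fun q : E * (V * E) => q.1 == z) (fun q => q.2.2 == z) (trip x s).
rewrite e0 addn0 => ->.
have h1 : count (fun q : E * (V * E) => q.1 == z) (trip x s) = count (pred1 z) (belast x (map snd s)).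
  transitivity (count (pred1 z) (map fst (trip x s))); first by rewrite count_map.
  congr (count _ _); apply: unzip1_zip; by rewrite size_belast size_map.
have h2 : count (fun q : E * (V * E) => q.2.2 == z) (trip x s) = count (pred1 z) (map snd s).
  transitivity (count (pred1 z) (map snd (map snd (trip x s)))); first by rewrite -map_comp count_map.
  congr (count _ (map _ _)); apply: unzip2_zip; by rewrite size_belast size_map.
by rewrite h1 h2.
Qed.

Lemma closed_count z x s : all goodq (trip x s) -> walk_end x s = x ->
  count (atz z) (trip x s) = 2 * traversals z s.
Proof.
move=> g e; rewrite count_trip // /traversals.
have := count_belast (pred1 z) x (map snd s).
rewrite -/(walk_end x s) e addnC => /addnI ->.
by rewrite mul2n addnn.
Qed.

Lemma open_count x s : all goodq (trip x s) -> walk_end x s != x ->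
  odd (count (atz (walk_end x s)) (trip x s)).
Proof.
move=> g ne; rewrite count_trip //.
have := count_belast (pred1 (walk_end x s)) x (map snd s).
rewrite -/(walk_end x s) /= eqxx eq_sym (negbTE ne) add0n => <-.
by rewrite addnA addnn oddD odd_double.
Qed.

Lemma three2 (S : {set E}) a b c : #|S| = 2 -> a \in S -> b \in S -> c \in S ->
  a != b -> (c == a) || (c == b).
Proof.
move/eqP/cards2P => [x [y [xy ->]]]; rewrite !in_set2.
case/orP=> /eqP -> ; case/orP=> /eqP ->; case/orP=> /eqP ->;
  rewrite ?eqxx ?orbT //.
Qed.

Hypothesis h2 : is_two_factor inc E'.
Hypothesis heven : forall e : E, ~~ odd #|inc e|.
Hypothesis hne : forall e : E, inc e != set0.

Lemma tf_at q z : goodq q -> z \in E' -> q.2.1 \in inc z -> atz z q.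
Proof.
case/and5P=> ne p1 p2 i1 i2 zE iz.
have := three2 (h2 q.2.1) _ _ _ ne.
rewrite !inE p1 p2 i1 i2 /= => /(_ z isT isT).
rewrite inE zE iz => /(_ isT).
by rewrite /atz !(eq_sym z).
Qed.

Lemma other_end v z : z \in E' -> v \in inc z ->
  exists w, [/\ w \in E', v \in inc w & w != z].
Proof.
move=> zE vz.
have := h2 v; move/eqP/cards2P => [x [y [xy eS]]].
have : z \in [set e in E' | v \in inc e] by rewrite inE zE vz.
have hx : x \in [set e in E' | v \in inc e] by rewrite eS !inE eqxx.
have hy : y \in [set e in E' | v \in inc e] by rewrite eS !inE eqxx orbT.
rewrite eS !inE => /orP [] /eqP ->.
- by exists y; move: hy; rewrite inE => /andP [-> ->]; rewrite eq_sym.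
- by exists x; move: hx; rewrite inE => /andP [-> ->].
Qed.

Lemma filt_le L z : all goodq L -> uniq (map vc L) ->
  size (filter (atz z) L) <= #|inc z|.
Proof.
move=> g u.
have uM : uniq (map vc (filter (atz z) L)).
  apply: subseq_uniq u; apply: map_subseq; exact: filter_subseq.
rewrite -(size_map vc) -(card_uniqP uM); apply: subset_leq_card.
apply/subsetP => v /mapP [q]; rewrite mem_filter => /andP [a qL] ->.
move/allP: g => /(_ q qL) /and5P [_ _ _ i1 i2].
by case/orP: a => /eqP <-.
Qed.

Lemma filt_full L z : all goodq L -> uniq (map vc L) -> z \in E' ->
  {subset inc z <= map vc L} -> size (filter (atz z) L) = #|inc z|.
Proof.
move=> g u zE sub; apply/eqP; rewrite eqn_leq filt_le //=.
have uM : uniq (map vc (filter (atz z) L)).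
  apply: subseq_uniq u; apply: map_subseq; exact: filter_subseq.
rewrite -(size_map vc) -(card_uniqP uM); apply: subset_leq_card.
apply/subsetP => v vz; have := sub v vz => /mapP [q qL qv].
apply/mapP; exists q => //; rewrite mem_filter qL andbT.
apply: tf_at => //; first by move/allP: g; apply.
by rewrite -[q.2.1]/(vc q) -qv.
Qed.

Lemma unused L z : all goodq L -> uniq (map vc L) -> z \in E' ->
  odd (size (filter (atz z) L)) -> exists2 v, v \in inc z & v \notin map vc L.
Proof.
move=> g u zE od.
case: (boolP (inc z \subset mem (map vc L))) => [/subsetP sub|/subsetPn //].
have := filt_full g u zE sub => e.
by move: od; rewrite e (negbTE (heven z)).
Qed.

Definition closedE (t : E * seq (V * E)) :=
  is_closed_strict_trail D t.1 t.2 && anchE t.1 t.2.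
Definition GF fam := all closedE fam && uniq (covs fam).

Lemma closedE_good t : closedE t -> all goodq (trip t.1 t.2).
Proof. by case/andP=> /andP [/and3P [w _ _] _] an; apply: walk_good. Qed.

Lemma GF_good fam : all closedE fam -> all goodq (tripF fam).
Proof.
elim: fam => [|t fam IH] //= /andP [c cs].
by rewrite /tripF /= all_cat closedE_good // IH.
Qed.

Lemma GF_count fam z : all closedE fam ->
  count (atz z) (tripF fam) = 2 * family_traversals z fam.
Proof.
rewrite /family_traversals.
elim: fam => [|t fam IH] /=; first by rewrite big_nil.
case/andP=> c cs; rewrite /tripF /= count_cat big_cons mulnDr -IH //.
congr (_ + _); apply: closed_count; first exact: closedE_good.
by case/andP: c => /andP [/and3P [_ _ /eqP ->] _].
Qed.

Lemma covs_size fam : uniq (covs fam) -> size (covs fam) <= #|V|.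
Proof. by move/card_uniqP <-; apply: max_card. Qed.

Lemma ext_step fam a v s : GF fam -> a \in E' -> v \in inc a -> v \notin covs fam ->
  is_walk D a s -> anchE a s -> uniq (wedges s ++ covs fam) ->
  ((walk_end a s == a) && (1 < size s)) \/
  exists p, [&& is_walk D a (rcons s p), anchE a (rcons s p) &
                uniq (wedges (rcons s p) ++ covs fam)].
Proof.
move=> /andP [cl uc] aE va vc0 w an u.
case: (boolP (walk_end a s == a)) => ea.
  case: s w an u ea => [|[e y] [|p' s]] w an u ea.
  - right; have [x [xE vx xa]] := other_end aE va.
    exists (v, x); rewrite /is_walk /= eq_sym xa inE !inD va vx /anchE aE /=.
    by apply/and3P; split => //; rewrite andbT; exact: xE.
  - by move: w ea; rewrite /is_walk /walk_end /= => /and5P [ne _ _ _ _]; rewrite eq_sym (negbTE ne).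
  - by left; apply/andP; split.
right.
set z := walk_end a s.
have zE : z \in E'.
  move: an; rewrite /anchE => /andP [aE' al].
  have : z \in a :: map snd s by apply: mem_last.
  rewrite inE => /orP [/eqP -> //|]; by move/allP: al; apply.
set L := trip a s ++ tripF fam.
have gL : all goodq L by rewrite all_cat walk_good // GF_good.
have uL : uniq (map vc L) by rewrite map_cat map_vc_trip map_vc_tripF.
have od : odd (size (filter (atz z) L)).
  rewrite size_filter count_cat GF_count // oddD open_count //; last exact: walk_good.
  by rewrite mul2n odd_double.
have [v' v'z v'n] := unused gL uL zE od.
have [x [xE v'x xz]] := other_end zE v'z.
exists (v', x).
have -> : is_walk D a (rcons s (v', x)).
  rewrite /is_walk -cats1 walk_cat -/(is_walk D a s) w /= -/z.
  by rewrite eq_sym xz inE !inD v'z v'x.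
move: an; rewrite /anchE map_rcons all_rcons => /andP [-> ->]; rewrite xE /=.
rewrite /wedges map_rcons -cats1 -catA.
rewrite uniq_catCA /= -/(wedges s).
by move: v'n; rewrite map_cat map_vc_trip map_vc_tripF => ->.
Qed.


Lemma size_uniq_le (s : seq V) : uniq s -> size s <= #|V|.
Proof. by move/card_uniqP <-; apply: max_card. Qed.

Lemma cycle fam a v : GF fam -> a \in E' -> v \in inc a -> v \notin covs fam ->
  exists s, closedE (a, s) && uniq (wedges s ++ covs fam).
Proof.
move=> g aE va vn.
suff H : forall n s, #|V| - size s <= n -> is_walk D a s -> anchE a s ->
    uniq (wedges s ++ covs fam) ->
    exists s', closedE (a, s') && uniq (wedges s' ++ covs fam).
  by apply: (H #|V| [::]) => //=; [rewrite subn0 | rewrite /anchE aE | case/andP: g].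
elim=> [|n IH] s hn w an u; case: (ext_step g aE va vn w an u).
- case/andP => ea sz; exists s; rewrite /closedE /is_closed_strict_trail /is_closed_walk /= w sz ea an u /=.
  by rewrite !andbT; move: u; rewrite cat_uniq => /andP [].
- case=> p /and3P [w' an' u'].
  have := size_uniq_le u'.
  rewrite size_cat /wedges size_map size_rcons => hh1.
  exfalso; lia.
- case/andP => ea sz; exists s; rewrite /closedE /is_closed_strict_trail /is_closed_walk /= w sz ea an u /=.
  by rewrite !andbT; move: u; rewrite cat_uniq => /andP [].
- case=> p /and3P [w' an' u'].
  apply: (IH (rcons s p)) => //.
  have := size_uniq_le u'.
  rewrite size_cat /wedges size_map size_rcons => hh1.
  lia.
Qed.

Lemma closedE_perm x y s s' : y \in E' -> closedE (x, s) ->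
  is_walk D y s' -> walk_end y s' = y -> perm_eq s' s -> closedE (y, s').
Proof.
move=> yE /andP [/andP [/and3P [w sz e] u] /andP [_ al]] w' e' p.
rewrite /closedE /is_closed_strict_trail /is_closed_walk /= w' e' eqxx (perm_size p) sz /=.
rewrite /wedges (perm_uniq (perm_map _ p)) u /anchE yE /=.
by rewrite (perm_all _ (perm_map _ p)).
Qed.

Lemma rotate x s y : closedE (x, s) -> y \in anchors x s ->
  exists s', closedE (y, s') && perm_eq (wedges s') (wedges s).
Proof.
move=> c; rewrite inE => /orP [/eqP ->|].
  by exists s; rewrite c perm_refl.
move=> /mapP [p ps ->].
case/splitPr: ps c => s1 s2 c.
have /andP [/andP [/and3P [w sz /eqP e] u] /andP [xE al]] := c.
rewrite /is_walk /= in w sz e u xE al.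
have ps : perm_eq (s2 ++ rcons s1 p) (s1 ++ p :: s2).
  by rewrite -cat_rcons perm_catC.
rewrite -cat_rcons in w e.
have := rot_closed w.
move=> /(_ e); rewrite walk_end_rcons => /andP [w2 /eqP e2].
exists (s2 ++ rcons s1 p); rewrite /wedges (perm_map _ ps) andbT.
apply: (closedE_perm _ c) => //.
by move/allP: al; apply; rewrite map_cat mem_cat /= inE eqxx orbT.
Qed.

Lemma merge y s1 s2 : closedE (y, s1) -> closedE (y, s2) ->
  uniq (wedges s1 ++ wedges s2) -> closedE (y, s1 ++ s2).
Proof.
move=> /andP [/andP [/and3P [w1 sz1 /eqP e1] _] /andP [yE al1]].
move=> /andP [/andP [/and3P [w2 sz2 /eqP e2] _] /andP [_ al2]] u.
rewrite /is_walk /= in w1 w2 sz1 e1 e2 yE al1 al2.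
rewrite /closedE /is_closed_strict_trail /is_closed_walk /=.
rewrite /is_walk walk_cat w1 e1 w2 walk_end_cat e1 e2 eqxx.
rewrite size_cat (leq_trans sz1 (leq_addr _ _)) /wedges map_cat -/(wedges s1) u.
by rewrite /anchE yE map_cat all_cat al1 al2.
Qed.

Lemma perm_covs f1 f2 : perm_eq f1 f2 -> perm_eq (covs f1) (covs f2).
Proof. by move=> p; apply: perm_flatten; apply: perm_map. Qed.

Lemma closedE_nonempty t : closedE t -> 0 < size (wedges t.2).
Proof. by case/andP=> /andP [/and3P [_ sz _] _] _; rewrite size_map (leq_trans _ sz). Qed.

Lemma GF_uniq fam : all closedE fam -> uniq (covs fam) -> uniq fam.
Proof.
elim: fam => [|t fam IH] //= /andP [ct cf]; rewrite /covs /= -/(covs fam) cat_uniq.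
case/and3P=> _ dj uf; rewrite IH // andbT.
apply/negP => tf.
have [v vw] : exists v, v \in wedges t.2.
  have := closedE_nonempty ct; case: (wedges t.2) => [//|v ws] _.
  by exists v; rewrite inE eqxx.
apply: (negP dj); apply/hasP; exists v => //.
apply/flattenP; exists (wedges t.2) => //; exact: (map_f (fun t => wedges t.2)).
Qed.

Lemma mem_covs fam t v : t \in fam -> v \in wedges t.2 -> v \in covs fam.
Proof.
move=> tf vw; apply/flattenP; exists (wedges t.2) => //.
exact: (map_f (fun t => wedges t.2)).
Qed.

Lemma size_fam_covs fam : all closedE fam -> size fam <= size (covs fam).
Proof.
elim: fam => [|t fam IH] //= /andP [c cs].
rewrite /covs /= size_cat -/(covs fam).
have := closedE_nonempty c; have := IH cs; lia.
Qed.


Lemma rotate' t y : closedE t -> y \in anchors t.1 t.2 ->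
  exists s', closedE (y, s') && perm_eq (wedges s') (wedges t.2).
Proof. by case: t => x s; apply: rotate. Qed.

Definition disjA (fam : seq (E * seq (V * E))) := forall t1 t2, t1 \in fam -> t2 \in fam -> t1 != t2 ->
  forall y, y \in anchors t1.1 t1.2 -> y \notin anchors t2.1 t2.2.
Definition complete (fam : seq (E * seq (V * E))) := [/\ GF fam, forall v, v \in covs fam & disjA fam].

Lemma improve fam : GF fam -> complete fam \/ exists fam', GF fam' /\
  ((size (covs fam) < size (covs fam')) \/
   (size (covs fam') = size (covs fam) /\ size fam' < size fam)).
Proof.
move=> g; have /andP [cl uc] := g.
case: (boolP [forall v, v \in covs fam]) => [/forallP allc | /forallPn [v vn]].
  case: (classic (exists t1 t2 y, [/\ t1 \in fam, t2 \in fam, t1 != t2,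
         y \in anchors t1.1 t1.2 & y \in anchors t2.1 t2.2]))
    => [[t1 [t2 [y [t1f t2f ne y1 y2]]]] | nex].
    right.
    have uf := GF_uniq cl uc.
    set rest := rem t2 (rem t1 fam).
    have pf : perm_eq fam (t1 :: t2 :: rest).
      apply: (perm_trans (perm_to_rem t1f)); rewrite perm_cons; apply: perm_to_rem.
      by rewrite (mem_rem_uniq _ uf) inE eq_sym ne t2f.
    have clp : all closedE (t1 :: t2 :: rest) by rewrite -(perm_all _ pf).
    case/and3P: clp => c1 c2 cr.
    have [s1 /andP [c1' p1]] := rotate' c1 y1.
    have [s2 /andP [c2' p2]] := rotate' c2 y2.
    have pc := perm_covs pf.
    have pc' : perm_eq (covs ((y, s1 ++ s2) :: rest)) (covs fam).
      rewrite perm_sym (perm_trans pc) // /covs /= -!/(covs rest) /wedges map_cat -!/(wedges _).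
      by rewrite catA perm_sym; apply: perm_cat => //; apply: perm_cat.
    exists ((y, s1 ++ s2) :: rest); split.
      rewrite /GF (perm_uniq pc') uc andbT; apply/andP; split; last exact: cr.
      apply: merge => //.
      move: uc; rewrite -(perm_uniq pc') /covs /= /wedges map_cat -!/(wedges _).
      by rewrite cat_uniq => /andP [].
    right; split; first by rewrite (perm_size pc').
    by rewrite (perm_size pf).
  left; split => // t1 t2 t1f t2f ne y y1; apply/negP => y2; apply: nex.
  by exists t1, t2, y; split.
right.
have := h2 v; move/eqP/cards2P => [a [b [_ eS]]].
have : a \in [set e in E' | v \in inc e] by rewrite eS !inE eqxx.
rewrite inE => /andP [aE va].
have [s /andP [cs us]] := cycle g aE va vn.
exists ((a, s) :: fam); split.
  by rewrite /GF /= cs cl /covs /= -/(covs fam) us.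
left; rewrite /covs /= size_cat -/(covs fam).
by have := closedE_nonempty cs; rewrite /=; lia.
Qed.

Lemma exists_complete : exists fam, complete fam.
Proof.
pose mu fam := (#|V| - size (covs fam)) * #|V|.+1 + size fam.
suff H : forall n fam, GF fam -> mu fam <= n -> exists f, complete f.
  by apply: (H (mu [::]) [::]).
have dec : forall fam f, GF fam -> GF f ->
   ((size (covs fam) < size (covs f)) \/
    (size (covs f) = size (covs fam) /\ size f < size fam)) -> mu f < mu fam.
  move=> fam f /andP [c1 u1] /andP [c2 u2] h.
  have b1 := covs_size u1; have b2 := covs_size u2.
  have s1 := size_fam_covs c1; have s2 := size_fam_covs c2.
  rewrite /mu; case: h => [lt|[eq lt]]; last by rewrite eq; lia.
  set a := #|V| - size (covs f); set b := #|V| - size (covs fam).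
  have ab : a.+1 <= b by rewrite /a /b; lia.
  have : a.+1 * #|V|.+1 <= b * #|V|.+1 by apply: leq_mul.
  rewrite mulSn; lia.
elim=> [|n IH] fam g hm; case: (improve g) => [c|[f [g' h]]]; try by exists fam.
  by have := dec _ _ g g' h; lia.
apply: (IH f g'); have := dec _ _ g g' h; lia.
Qed.

End Main.

Arguments vc {V E} q.

Section Final.
Variables (V E : finType) (inc : E -> {set V}) (E' : {set E}).
Notation D := (dual_inc inc).

Lemma uniq_map_inj (A B : eqType) (f : A -> B) (L : seq A) q q' :
  uniq (map f L) -> q \in L -> q' \in L -> f q = f q' -> q = q'.
Proof.
elim: L => [|a L IH] //= /andP [na u]; rewrite !inE.
case/orP=> [/eqP ->|qL]; case/orP=> [/eqP ->|q'L] // e.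
- by move: na; rewrite e map_f.
- by move: na; rewrite -e map_f.
- exact: IH.
Qed.

Lemma count_covs (fam : seq (E * seq (V * E))) v : all (fun t => uniq (wedges t.2)) fam ->
  count (pred1 v) (covs fam) = count (fun t => v \in wedges t.2) fam.
Proof.
elim: fam => [|t fam IH] //= /andP [ut uf].
by rewrite /covs /= count_cat -/(covs fam) IH // count_uniq_mem.
Qed.

Lemma trip_anchors (x : E) (s : seq (V * E)) q : q \in trip x s ->
  q.1 \in anchors x s /\ q.2.2 \in anchors x s.
Proof.
move=> qin; split.
  have : q.1 \in map fst (trip x s) by apply: map_f.
  have -> : map fst (trip x s) = belast x (map snd s).
    by apply: unzip1_zip; rewrite size_belast size_map.
  move=> /mem_belast.
  by rewrite /anchors.
have : q.2 \in map snd (trip x s) by apply: map_f.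
have -> : map snd (trip x s) = s.
  by apply: unzip2_zip; rewrite size_belast size_map.
move=> h.
by rewrite /anchors inE (map_f snd h) orbT.
Qed.

Lemma mem_tripF (fam : seq (E * seq (V * E))) q : q \in tripF fam -> exists2 t, t \in fam & q \in trip t.1 t.2.
Proof.
case/flattenP => l /mapP [t tf ->] ql; by exists t.
Qed.

Lemma two_half n : ~~ odd n -> 2 * (n %/ 2) = n.
Proof. by move=> h; rewrite divn2 mul2n halfK (negbTE h) subn0. Qed.

Lemma fam_to_tf (fam : seq (E * seq (V * E))) :
  (forall e : E, ~~ odd #|inc e|) ->
  is_euler_family D fam -> family_anchor_set fam = E' ->
  (forall e, e \in E' -> family_traversals e fam = #|inc e| %/ 2) ->
  is_two_factor inc E'.
Proof.
move=> heven [cl cnt dj] an tr.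
have anE : forall t y, t \in fam -> y \in anchors t.1 t.2 -> y \in E'.
  move=> t y tf ya; rewrite -an inE; apply/hasP; by exists t.
have clE : all (closedE inc E') fam.
  apply/allP => t tf; rewrite /closedE cl //= /anchE.
  rewrite (anE t t.1) ?inE ?eqxx //=.
  apply/allP => y yin; apply: (anE t) => //; by rewrite inE yin orbT.
have uw : all (fun t => uniq (wedges t.2)) fam.
  by apply/allP => t tf; case/andP: (cl t tf).
have cv : forall v, count (pred1 v) (covs fam) = 1 by move=> v; rewrite count_covs // cnt.
have uc : uniq (covs fam).
  apply: count_mem_uniq => v; rewrite cv.
  suff -> : v \in covs fam by [].
  by rewrite -has_pred1 has_count cv.
have covd : forall v, v \in covs fam by move=> v; rewrite -has_pred1 has_count cv.
set L := tripF fam.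
have gL : all (goodq inc E') L by apply: GF_good.
have uL : uniq (map vc L) by rewrite map_vc_tripF.
have full : forall e v, e \in E' -> v \in inc e ->
    exists2 q, q \in L & (vc q == v) && atz e q.
  move=> e v eE ve.
  have sz : size (filter (atz e) L) = #|inc e|.
    by rewrite size_filter (GF_count _ clE) tr // two_half.
  have uM : uniq (map vc (filter (atz e) L)).
    apply: subseq_uniq uL; apply: map_subseq; exact: filter_subseq.
  have sub : mem (map vc (filter (atz e) L)) \subset inc e.
    apply/subsetP => w /mapP [q]; rewrite mem_filter => /andP [a qL] ->.
    move/allP: gL => /(_ q qL) /and5P [_ _ _ i1 i2].
    by case/orP: a => /eqP <-.
  have cd : #|mem (map vc (filter (atz e) L))| = #|inc e|.
    by rewrite (card_uniqP uM) size_map sz.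
  have := subset_cardP cd sub => /(_ v); rewrite ve => /mapP [q].
  by rewrite mem_filter => /andP [a qL] ->; exists q => //; rewrite eqxx.
move=> v.
have : v \in map vc L by rewrite map_vc_tripF.
case/mapP => q qL vq.
have /and5P [ne pE cE ip ic] := allP gL q qL.
suff -> : [set e in E' | v \in inc e] = [set q.1; q.2.2] by rewrite cards2 ne.
apply/setP => e; rewrite !inE; apply/idP/idP.
  case/andP => eE ve; have [q' q'L /andP [/eqP vq' a]] := full e v eE ve.
  have qq : q' = q by apply: (uniq_map_inj uL) => //; rewrite vq'.
  by move: a; rewrite qq /atz !(eq_sym e).
by case/orP=> /eqP ->; rewrite vq ?pE ?cE ?ip ?ic.
Qed.

Lemma tour_fam (x : E) (s : seq (V * E)) : is_euler_tour D x s -> is_euler_family D [:: (x, s)].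
Proof.
case=> c all; split.
- by move=> t; rewrite inE => /eqP ->.
- by move=> e /=; rewrite all.
- by case=> [|i] [|j].
Qed.

End Final.

Section Final2.
Variables (V E : finType) (inc : E -> {set V}) (E' : {set E}).
Notation D := (dual_inc inc).
Hypothesis h2 : is_two_factor inc E'.
Hypothesis heven : forall e : E, ~~ odd #|inc e|.
Hypothesis hne : forall e : E, inc e != set0.

Lemma anchors_E t y : closedE inc E' t -> y \in anchors t.1 t.2 -> y \in E'.
Proof.
case/andP=> _ /andP [xE al]; rewrite inE => /orP [/eqP -> //|].
by move/allP: al; apply.
Qed.

Lemma anchor_of t x e : closedE inc E' t -> x \in wedges t.2 -> e \in E' -> x \in inc e ->
  e \in anchors t.1 t.2.
Proof.
move=> c xw eE xe.
move: xw; rewrite -(map_vc_trip t.1) => /mapP [q qin xq].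
have g := allP (closedE_good c) q qin.
have := tf_at h2 g eE; rewrite -[q.2.1]/(vc q) -xq => /(_ xe).
have [a1 a2] := trip_anchors qin.
by case/orP => /eqP <-.
Qed.

Lemma covs_trail (fam : seq (E * seq (V * E))) v : v \in covs fam ->
  exists2 t, t \in fam & v \in wedges t.2.
Proof. by case/flattenP => l /mapP [t tf ->] vl; exists t. Qed.

Lemma uniq_cov_trail (fam : seq (E * seq (V * E))) t t' v : uniq (covs fam) ->
  t \in fam -> t' \in fam -> v \in wedges t.2 -> v \in wedges t'.2 -> t = t'.
Proof.
elim: fam => [|a fam IH] //; rewrite /covs /= -/(covs fam) cat_uniq.
case/and3P=> _ dj u; rewrite !inE.
have nin : forall s, s \in fam -> v \in wedges a.2 -> v \in wedges s.2 -> False.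
  move=> s sf va vs; move/hasP: dj; apply; exists v => //; exact: mem_covs vs.
case/orP=> [/eqP ->|tf]; case/orP=> [/eqP ->|t'f] // v1 v2.
- by case: (nin _ t'f v1 v2).
- by case: (nin _ tf v2 v1).
- exact: IH.
Qed.

Lemma complete_props fam : complete inc E' fam ->
  [/\ is_euler_family D fam, family_anchor_set fam = E' &
      forall e, e \in E' -> family_traversals e fam = #|inc e| %/ 2].
Proof.
case=> /andP [cl uc] covd dj.
have uf := GF_uniq cl uc.
have uw : all (fun t => uniq (wedges t.2)) fam.
  by apply/allP => t tf; case/andP: (allP cl t tf) => /andP [_ ->].
split.
- split.
  + by move=> t tf; case/andP: (allP cl t tf).
  + by move=> v; rewrite -count_covs // count_uniq_mem // covd.
  + move=> i j hi hj ij y; apply: dj; try exact: mem_nth.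
    by rewrite nth_uniq.
- apply/setP => e; rewrite inE; apply/idP/idP.
    by case/hasP => t tf; apply: anchors_E; exact: (allP cl t tf).
  move=> eE; have [v ve] := set0Pn _ (hne e).
  have [t tf vt] := covs_trail (covd v).
  apply/hasP; exists t => //; apply: (anchor_of (allP cl t tf) vt eE ve).
- move=> e eE.
  have uL : uniq (map vc (tripF fam)) by rewrite map_vc_tripF.
  have := filt_full h2 (GF_good cl) uL eE (fun v _ => ltac:(by rewrite map_vc_tripF covd)).
  rewrite size_filter (GF_count _ cl) => h.
  have := two_half (heven e); lia.
Qed.


Lemma walk_same fam : complete inc E' fam -> forall x s t,
  is_walk_in inc E' x s -> t \in fam -> x \in wedges t.2 -> walk_end x s \in wedges t.2.
Proof.
case=> /andP [cl uc] covd dj.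
move=> x s; elim: s x => [|[e y] s IH] x t //= /and5P [xy eE xe ye w] tf xt.
have [t' t'f yt'] := covs_trail (covd y).
have a1 := anchor_of (allP cl t tf) xt eE xe.
have a2 := anchor_of (allP cl t' t'f) yt' eE ye.
have tt : t' = t.
  apply/eqP; apply/negPn/negP => ne.
  by move: (dj t' t t'f tf ne e a2); rewrite a1.
rewrite -/(walk_end y s); apply: IH => //; by rewrite -tt.
Qed.

Lemma connected_single fam : complete inc E' fam -> is_connected_sub inc E' ->
  0 < #|V| -> exists t, fam = [:: t].
Proof.
move=> c con /card_gt0P [v0 _].
have c' := c; case: c' => /andP [cl uc] covd dj.
have uf := GF_uniq cl uc.
have [t0 t0f v0t] := covs_trail (covd v0).
have allt : forall t, t \in fam -> t = t0.
  move=> t tf.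
  have [w wt] : exists w, w \in wedges t.2.
    have := closedE_nonempty (allP cl t tf); case: (wedges t.2) => [//|w ws] _.
    by exists w; rewrite inE eqxx.
  case: (eqVneq v0 w) => [e|ne].
    by apply: (uniq_cov_trail uc tf t0f wt); rewrite -e.
  have [h /andP [hw /eqP he]] := con _ _ ne.
  have := walk_same c hw t0f v0t; rewrite he => wt0.
  exact: (uniq_cov_trail uc tf t0f wt wt0).
exists t0.
clear c; case: fam uf allt t0f {cl uc covd dj} => [//|a [|b f]] uf allt t0f.
  by rewrite (allt a) // inE eqxx.
move: uf; rewrite /= (allt a) ?inE ?eqxx // (allt b) ?inE ?eqxx ?orbT //.
Qed.

End Final2.

Section Conn.
Variables (V E : finType) (inc : E -> {set V}) (E' : {set E}).
Notation D := (dual_inc inc).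

Lemma hwalk z u c r w : is_walk D z ((u, c) :: r) ->
  all (fun y => y \in E') (map snd ((u, c) :: r)) -> uniq (wedges ((u, c) :: r)) ->
  w \in wedges r -> exists h, is_walk_in inc E' u h && (walk_end u h == w).
Proof.
elim: r z u c => [|[u' c'] r IH] z u c //= wk al un win.
move: wk; rewrite /is_walk /= => /and5P [_ _ _ cu /and5P [cc' _ cu' c'u' wr]].
move: al => /andP [cE al]; move: un => /andP [nu un].
have uu' : u != u' by move: nu; rewrite inE negb_or => /andP [].
have h1 : [&& u != u', c \in E', u \in inc c, u' \in inc c & true].
  by rewrite uu' cE -!(inD inc) cu cu'.
move: win; rewrite inE => /orP [/eqP ->|wr'].
  by exists [:: (c, u')]; rewrite /= h1 /walk_end /=.
have [h /andP [hw he]] := IH c u' c' (ltac:(by apply/and5P; split; rewrite ?in_setT)) al un wr'.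
by exists ((c, u') :: h); rewrite /= hw he andbT uu' cE -!(inD inc) cu cu'.
Qed.

Lemma tour_connected x s : is_euler_tour D x s -> tour_anchor_set x s = E' ->
  is_connected_sub inc E'.
Proof.
case=> /andP [/and3P [w sz /eqP e] un] cov an u v uv.
have al : all (fun y => y \in E') (map snd s).
  apply/allP => y ys; rewrite -an inE /anchors inE ys orbT //.
have := cov u; case/mapP => p ps pu.
case/splitPr: ps w e un al cov => s1 s2 w e un al cov.
have := rot_closed w e => /andP [w' _].
case: p pu w' w e un al cov => u0 c /= pu w' w e un al cov; subst u0.
apply: (hwalk w').
- apply/allP => y yin; move/allP: al; apply; move: yin.
  rewrite !map_cat !mem_cat /= !inE ?map_cat ?mem_cat.
  by case/orP=> [->|/orP [->|->]]; rewrite ?orbT.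
- move: un; rewrite /wedges !map_cat /= map_cat -cat1s uniq_catCA /= mem_cat mem_cat orbC.
  by rewrite uniq_catC.
- have := cov v; rewrite /wedges !map_cat !mem_cat /= in_cons eq_sym (negbTE uv) /=.
  by rewrite orbC.
Qed.

End Conn.
Unset Implicit Arguments.

Theorem theorem2p44 (V E : finType) (inc : E -> {set V})
    (hV : 0 < #|V|) (hE : 0 < #|E|)
    (hnonempty : forall e : E, inc e != set0)
    (heven : forall e : E, ~~ odd #|inc e|)
    (E' : {set E}) :
  (is_two_factor inc E' <->
     exists fam : seq (E * seq (V * E)),
       [/\ is_euler_family (dual_inc inc) fam,
           family_anchor_set fam = E' &
           forall e, e \in E' -> family_traversals e fam = #|inc e| %/ 2])
  /\
  (is_connected_two_factor inc E' <->
     exists (x : E) (s : seq (V * E)),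
       [/\ is_euler_tour (dual_inc inc) x s,
           tour_anchor_set x s = E' &
           forall e, e \in E' -> traversals e s = #|inc e| %/ 2]).
Proof.
split; split.
- move=> h2; have [fam c] := exists_complete h2 heven.
  have := complete_props h2 heven hnonempty c.
  match goal with |- ?g => idtac g end.
  by move=> h; exists fam.
- by case=> fam [ef an tr]; exact: fam_to_tf heven ef an tr.
- case=> h2 con; have [fam c] := exists_complete h2 heven.
  have [t ft] := connected_single h2 c con hV.
  have [ef an tr] := complete_props h2 heven hnonempty c.
  rewrite ft in ef an tr; case: ef => cl cnt _.
  exists t.1, t.2; split.
  + split; first by apply: cl; rewrite inE eqxx.
    by move=> e; have := cnt e; rewrite /= addn0; case: (e \in _).
  + by rewrite -an; apply/setP => y; rewrite !inE /= orbF.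
  + by move=> e eE; rewrite -tr // /family_traversals big_seq1.
- case=> x [s [tour an tr]].
  have ef := tour_fam tour.
  split; last exact: tour_connected tour an.
  apply: (fam_to_tf heven ef).
    by rewrite -an; apply/setP => y; rewrite !inE /= orbF.
  by move=> e eE; rewrite /family_traversals big_seq1 tr.
Qed.
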